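(* $$\sum_{k=1}^\infty\frac{12635k^2-5259k+832}{k\binom{4k}k}\left(\frac 98\right)^{k-1}=1944+\frac{640}{\sqrt3}\pi.$$ *)

(* Defs.v *)
From Stdlib Require Import Reals.
From Coquelicot Require Import Coquelicot.
Open Scope R_scope.

Definition lemma2p2_term (k : nat) : R :=
  (12635 * INR k ^ 2 - 5259 * INR k + 832)
    / (INR k * Binomial.C (4 * k) k) * (9 / 8) ^ (k - 1).

(* Main.v *)
Require Import Defs.
From Stdlib Require Import Reals Lra Lia Factorial.
From Coquelicot Require Import Coquelicot.
Open Scope R_scope.

Lemma INR_match (n : nat) : (match n with 0%nat => 1 | S _ => INR n + 1 end) = INR n + 1.
Proof. destruct n; simpl; lra. Qed.

Lemma beta_int (n m : nat) :
  is_RInt (fun t => t ^ n * (1 - t) ^ m) 0 1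
    (INR (fact n) * INR (fact m) / INR (fact (n + m + 1))).
Proof.
  revert m; induction n as [|n IH]; intro m.
  - set (c := INR (S m)).
    assert (Hc : c <> 0) by (unfold c; apply not_0_INR; lia).
    assert (Hc' : INR m + 1 <> 0) by (unfold c in Hc; rewrite S_INR in Hc; auto).
    assert (H := is_RInt_derive (fun t => - (1 - t) ^ (S m) / c)
                   (fun t => t ^ 0 * (1 - t) ^ m) 0 1).
    replace (INR (fact 0) * INR (fact m) / INR (fact (0 + m + 1)))
      with (minus (- (1 - 1) ^ S m / c) (- (1 - 0) ^ S m / c)).
    + apply H.
      * intros x _. auto_derive; auto. rewrite INR_match. fold c.
        replace c with (INR m + 1) by (unfold c; rewrite S_INR; auto).
        change (1 + - x) with (1 - x). field. auto.
      * intros x _. apply (@ex_derive_continuous R_AbsRing R_NormedModule). auto_derive. auto.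
    + rewrite Nat.add_0_l, Nat.add_1_r. simpl fact at 1. rewrite fact_simpl, mult_INR.
      unfold minus, plus, opp; simpl. fold c. rewrite INR_match. replace (1-0) with 1 by ring.
      rewrite pow1. replace c with (INR m + 1) by (unfold c; rewrite S_INR; auto).
      field. split. apply INR_fact_neq_0. auto.
  - set (c := INR (S m)).
    assert (Hc : c <> 0) by (unfold c; apply not_0_INR; lia).
    assert (Hc' : INR m + 1 <> 0) by (unfold c in Hc; rewrite S_INR in Hc; auto).
    set (F := fun t => - (t ^ S n * (1 - t) ^ (S m)) / c).
    set (f := fun t => t ^ S n * (1 - t) ^ m - INR (S n) / c * (t ^ n * (1 - t) ^ S m)).
    assert (Hd : forall x, Rmin 0 1 <= x <= Rmax 0 1 -> is_derive F x (f x)).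
    { intros x _. unfold F, f. auto_derive; auto. rewrite !INR_match.
      replace c with (INR m + 1) by (unfold c; rewrite S_INR; auto).
      change (1 + - x) with (1 - x). rewrite !S_INR. cbn [pow]. field. auto. }
    assert (Hct : forall x, Rmin 0 1 <= x <= Rmax 0 1 -> continuous f x).
    { intros x _. apply (@ex_derive_continuous R_AbsRing R_NormedModule). unfold f. auto_derive. auto. }
    assert (H := is_RInt_derive F f 0 1 Hd Hct).
    assert (H2 := is_RInt_scal _ 0 1 (INR (S n) / c) _ (IH (S m))).
    assert (H3 := is_RInt_plus _ _ 0 1 _ _ H H2).
    eapply is_RInt_ext; [|replace (INR (fact (S n)) * INR (fact m) / INR (fact (S n + m + 1))) with (plus (minus (F 1) (F 0)) (scal (INR (S n) / c) (INR (fact n) * INR (fact (S m)) / INR (fact (n + S m + 1))))); [exact H3|]].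
    + intros x _. unfold f, plus, scal; simpl. unfold mult; simpl. ring.
    + assert (E1: INR (fact (S n + m + 1)) = (INR n + INR m + 2) * INR (fact (n+m+1))).
      { replace (S n + m + 1)%nat with (S (n+m+1)) by lia. rewrite fact_simpl, mult_INR, S_INR, !plus_INR. simpl. ring. }
      replace (n + S m + 1)%nat with (S n + m + 1)%nat by lia.
      rewrite E1, (fact_simpl n), (fact_simpl m), !mult_INR.
      unfold F. replace c with (INR m + 1) by (unfold c; rewrite S_INR; auto).
      rewrite !S_INR. change (plus ?a ?b) with (a + b). change (minus ?a ?b) with (a + - b).
      change (scal ?a ?b) with (a * b). rewrite pow1. cbn [pow].
      assert (INR (fact (n+m+1)) <> 0) by apply INR_fact_neq_0.
      assert (INR n + INR m + 2 <> 0) by (assert (0 <= INR n) by apply pos_INR; assert (0 <= INR m) by apply pos_INR; lra).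
      match goal with |- ?a = ?b => change (@eq R a b) end. field. repeat split; auto.
Qed.
Ltac toR := match goal with |- ?a = ?b => change (@eq R a b) end.

Definition Wp (y : R) := 8208 + 16230 * y + 832 * y ^ 2.
Definition yv (t : R) := 9 / 8 * (t * (1 - t) ^ 3).
Definition gf (t : R) := (1 - t) ^ 3 * Wp (yv t) / (1 - yv t) ^ 3.
Definition Qp (t : R) := (1 + 3 * t ^ 2) * (3 * t ^ 2 - 9 * t + 8).
Definition Ap (t : R) :=
  -504320/3 + t * (767360 + t * (-1507776 + t * (1352448 + t * (-648320
   + t * (217728 + t * (-63936 + t * 6912)))))).
Definition Fp (t : R) := Ap t / Qp t ^ 2 - 1664 / 9 * ln (Qp t)
   + 1920 / sqrt 3 * atan (sqrt 3 * t).

Lemma q1_pos t : 0 < 1 + 3 * t ^ 2.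
Proof. nra. Qed.
Lemma q2_pos t : 0 < 3 * t ^ 2 - 9 * t + 8.
Proof. assert (0 <= (t - 3/2)^2) by apply pow2_ge_0. nra. Qed.
Lemma Qp_pos t : 0 < Qp t.
Proof. unfold Qp. apply Rmult_lt_0_compat; [apply q1_pos|apply q2_pos]. Qed.

Lemma yv_eq t : 1 - yv t = Qp t / 8.
Proof. unfold yv, Qp. field. Qed.

Lemma gf_eq t : gf t = 512 * ((1 - t) ^ 3 * Wp (yv t)) / Qp t ^ 3.
Proof.
  unfold gf. rewrite yv_eq. field. apply Rgt_not_eq, Qp_pos.
Qed.

Lemma Fp_derive t : is_derive Fp t (gf t).
Proof.
  assert (h1 := q1_pos t). assert (h2 := q2_pos t).
  assert (hs : 0 < sqrt 3) by (apply sqrt_lt_R0; lra).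
  assert (D1 : is_derive (fun t => Ap t / Qp t ^ 2 - 1664 / 9 * ln (Qp t)) t
                (gf t - 1920 / (1 + 3 * t ^ 2))).
  { rewrite gf_eq. unfold Ap, Qp, Wp, yv. auto_derive.
    + set (X := (1 + 3 * (t * (t * 1))) * (3 * (t * (t * 1)) + - (9 * t) + 8)). assert (0 < X) by (unfold X; apply Rmult_lt_0_compat; nra). repeat split; try lra. apply Rmult_integral_contrapositive_currified; lra.
    + field. lra. }
  assert (D2 : is_derive (fun t => 1920 / sqrt 3 * atan (sqrt 3 * t)) t
                (1920 / (1 + 3 * t ^ 2))).
  { assert (Hi : is_derive (fun t => sqrt 3 * t) t (sqrt 3)) by (auto_derive; auto; ring).
    assert (H := is_derive_comp atan (fun t => sqrt 3 * t) t _ _ (is_derive_atan _) Hi).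
    apply (is_derive_ext (fun t => 1920 / sqrt 3 * atan (sqrt 3 * t))); [reflexivity|].
    assert (H2 := is_derive_scal (fun t => atan (sqrt 3 * t)) t (1920 / sqrt 3) _ H).
    replace (1920 / (1 + 3 * t ^ 2)) with (scal (1920 / sqrt 3) (scal (sqrt 3) (/ (1 + (sqrt 3 * t)²)))).
    exact H2.
    change (scal ?a ?b) with (a * b). unfold Rsqr. match goal with |- ?a = ?b => change (@eq R a b) end.
    replace (1 + sqrt 3 * t * (sqrt 3 * t)) with (1 + (sqrt 3 * sqrt 3) * t ^ 2) by ring.
    rewrite sqrt_sqrt by lra. change (scal ?a ?b) with (a * b). field. lra. }
  replace (gf t) with (plus (gf t - 1920 / (1 + 3 * t ^ 2)) (1920 / (1 + 3 * t ^ 2))).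
  2:{ change (plus ?a ?b) with (a + b). match goal with |- ?a = ?b => change (@eq R a b) end. ring. }
  exact (is_derive_plus _ _ _ _ _ D1 D2).
Qed.

Lemma gf_cont t : continuous gf t.
Proof.
  apply (continuous_ext (fun t => 512 * ((1 - t) ^ 3 * Wp (yv t)) / Qp t ^ 3)).
  { intro x. symmetry. apply gf_eq. }
  apply (@ex_derive_continuous R_AbsRing R_NormedModule).
  assert (h := Qp_pos t). unfold Qp in h.
  unfold Qp, Wp, yv. auto_derive.
  set (X := (1 + 3 * (t * (t * 1))) * (3 * (t * (t * 1)) + - (9 * t) + 8)).
  assert (0 < X) by (unfold X; apply Rmult_lt_0_compat; nra).
  repeat split; try lra. apply Rmult_integral_contrapositive_currified; try lra.
  apply Rmult_integral_contrapositive_currified; lra.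
Qed.

Lemma atan_sqrt3 : atan (sqrt 3 * 1) = PI / 3.
Proof.
  rewrite Rmult_1_r, <- tan_PI3. apply atan_tan.
  assert (h := PI_RGT_0). lra.
Qed.

Lemma gf_int : is_RInt gf 0 1 (1944 + 640 / sqrt 3 * PI).
Proof.
  assert (H := is_RInt_derive Fp gf 0 1 (fun x _ => Fp_derive x) (fun x _ => gf_cont x)).
  replace (1944 + 640 / sqrt 3 * PI) with (minus (Fp 1) (Fp 0)). exact H.
  unfold Fp. rewrite atan_sqrt3, Rmult_0_r, atan_0.
  replace (Qp 1) with 8 by (unfold Qp; ring). replace (Qp 0) with 8 by (unfold Qp; ring).
  unfold Ap. change (minus ?a ?b) with (a - b). toR.
  assert (0 < sqrt 3) by (apply sqrt_lt_R0; lra). field. lra.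
Qed.

Definition Pp (n : nat) := 12635 * INR n ^ 2 - 5259 * INR n + 832.
Definition fk (n : nat) (t : R) := Pp (S n) * (9 / 8) ^ n * (t ^ n * (1 - t) ^ (3 * S n)).

Lemma term_int n : is_RInt (fk n) 0 1 (lemma2p2_term (S n)).
Proof.
  assert (H := is_RInt_scal _ 0 1 (Pp (S n) * (9 / 8) ^ n) _ (beta_int n (3 * S n))).
  eapply is_RInt_ext; [|replace (lemma2p2_term (S n)) with
    (scal (Pp (S n) * (9 / 8) ^ n) (INR (fact n) * INR (fact (3 * S n)) / INR (fact (n + 3 * S n + 1)))); [exact H|]].
  - intros x _. reflexivity.
  - unfold lemma2p2_term, Binomial.C, Pp. change (scal ?a ?b) with (a * b). toR.
    replace (S n - 1)%nat with n by lia.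
    replace (4 * S n - S n)%nat with (3 * S n)%nat by lia.
    replace (n + 3 * S n + 1)%nat with (4 * S n)%nat by lia.
    rewrite (fact_simpl n), !mult_INR.
    assert (INR (S n) <> 0) by (apply not_0_INR; lia).
    assert (INR (fact n) <> 0) by apply INR_fact_neq_0.
    assert (INR (fact (3 * S n)) <> 0) by apply INR_fact_neq_0.
    assert (INR (fact (4 * S n)) <> 0) by apply INR_fact_neq_0.
    field. repeat split; auto.
Qed.

Lemma sum_int N : is_RInt (fun t => sum_n (fun k => fk k t) N) 0 1
   (sum_n (fun k => lemma2p2_term (S k)) N).
Proof.
  induction N as [|N IH].
  - rewrite sum_O. eapply is_RInt_ext; [|apply term_int]. intros x _. rewrite sum_O. reflexivity.
  - rewrite sum_Sn. eapply is_RInt_ext; [|apply (is_RInt_plus _ _ _ _ _ _ IH (term_int (S N)))].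
    intros x _. rewrite sum_Sn. reflexivity.
Qed.

Definition Vp (N : nat) (y : R) :=
  let n := INR N in
  (12635 * n ^ 2 + 45281 * n + 40854) + (-25270 * n ^ 2 - 65292 * n - 23792) * y
  + (12635 * n ^ 2 + 20011 * n + 8208) * y ^ 2.

Lemma sumP N y : (1 - y) ^ 3 * sum_n (fun k => Pp (S k) * y ^ k) N = Wp y - y ^ (S N) * Vp N y.
Proof.
  induction N as [|N IH].
  - rewrite sum_O. unfold Pp, Vp, Wp. simpl. ring.
  - rewrite sum_Sn. change (plus ?a ?b) with (a + b).
    rewrite Rmult_plus_distr_l, IH. unfold Pp, Vp, Wp. rewrite !S_INR. cbn [pow]. ring.
Qed.

Lemma fk_sum N t : sum_n (fun k => fk k t) N = (1 - t) ^ 3 * sum_n (fun k => Pp (S k) * yv t ^ k) N.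
Proof.
  rewrite <- (sum_n_mult_l ((1 - t) ^ 3)). apply sum_n_ext. intro k.
  unfold fk, yv. change (mult ?a ?b) with (a * b).
  rewrite pow_mult, !Rpow_mult_distr. cbn [pow]. toR. ring.
Qed.

Lemma err_eq N t : 0 <= t <= 1 ->
  gf t - sum_n (fun k => fk k t) N = (1 - t) ^ 3 * yv t ^ (S N) * Vp N (yv t) / (1 - yv t) ^ 3.
Proof.
  intro ht. assert (h := Qp_pos t). assert (hy : 1 - yv t <> 0) by (rewrite yv_eq; lra).
  rewrite fk_sum. assert (E := sumP N (yv t)).
  set (S0 := sum_n (fun k => Pp (S k) * yv t ^ k) N) in *.
  replace S0 with ((Wp (yv t) - yv t ^ S N * Vp N (yv t)) / (1 - yv t) ^ 3).
  2:{ rewrite <- E. field. auto. }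
  unfold gf. field. auto.
Qed.

Lemma yv_bound t : 0 <= t <= 1 -> 0 <= yv t <= 1 / 8.
Proof.
  intro ht. unfold yv.
  assert (E : 27 / 256 - t * (1 - t) ^ 3 = (t - 1/4) ^ 2 * ((t - 5/4) ^ 2 + 1/8)) by field.
  assert (0 <= (t - 1/4) ^ 2) by apply pow2_ge_0.
  assert (0 <= (t - 5/4) ^ 2) by apply pow2_ge_0.
  assert (0 <= (t - 1/4) ^ 2 * ((t - 5/4) ^ 2 + 1/8)) by (apply Rmult_le_pos; lra).
  assert (0 <= (1 - t) ^ 3) by (apply pow_le; lra).
  assert (0 <= t * (1 - t) ^ 3) by (apply Rmult_le_pos; lra).
  lra.
Qed.

Lemma Vp_bound N y : 0 <= y <= 1 / 8 -> Rabs (Vp N y) <= 131000 * INR (S N) ^ 2.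
Proof.
  intro hy. unfold Vp. rewrite S_INR. set (n := INR N).
  assert (hn : 0 <= n) by apply pos_INR.
  assert (0 <= n ^ 2) by (apply pow_le; lra).
  assert (0 <= n ^ 2 * y) by (apply Rmult_le_pos; lra).
  assert (n ^ 2 * y <= n ^ 2) by nra.
  assert (0 <= n * y) by (apply Rmult_le_pos; lra).
  assert (n * y <= n) by nra.
  assert (0 <= y ^ 2 <= y) by (split; [apply pow2_ge_0| simpl; nra]).
  assert (0 <= n ^ 2 * y ^ 2 <= n ^ 2) by (split; [apply Rmult_le_pos; lra | nra]).
  assert (0 <= n * y ^ 2 <= n) by (split; [apply Rmult_le_pos; lra | nra]).
  apply Rabs_le. split; nra.
Qed.

Lemma sq_le_4pow N : INR (S N) ^ 2 <= 4 ^ (S N).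
Proof.
  induction N as [|N IH].
  - simpl. lra.
  - rewrite S_INR. replace (4 ^ S (S N)) with (4 ^ S N * 4) by (simpl; ring).
    assert (0 <= INR N) by apply pos_INR.
    apply Rle_trans with (4 * INR (S N) ^ 2).
    + rewrite S_INR. nra.
    + rewrite (Rmult_comm (4 ^ S N)). lra.
Qed.

Lemma err_bound N t : 0 <= t <= 1 ->
  Rabs (gf t - sum_n (fun k => fk k t) N) <= 262000 * (1 / 2) ^ (S N).
Proof.
  intro ht. rewrite err_eq by auto.
  destruct (yv_bound t ht) as [y0 y1].
  set (y := yv t) in *.
  assert (h1 : Rabs ((1 - t) ^ 3) <= 1).
  { rewrite Rabs_pos_eq by (apply pow_le; lra). replace 1 with (1 ^ 3) at 2 by ring.
    apply pow_incr; lra. }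
  assert (h2 : Rabs (y ^ S N) <= (1 / 8) ^ S N).
  { rewrite Rabs_pos_eq by (apply pow_le; lra). apply pow_incr; lra. }
  assert (h3 := Vp_bound N y (conj y0 y1)).
  assert (h4 : Rabs (/ (1 - y) ^ 3) <= 2).
  { rewrite Rabs_pos_eq. 2:{ apply Rlt_le, Rinv_0_lt_compat, pow_lt; lra. }
    assert (0 < (1 - y) ^ 3) by (apply pow_lt; lra).
    assert ((7/8) ^ 3 <= (1 - y) ^ 3) by (apply pow_incr; lra).
    apply (Rmult_le_reg_l ((1 - y) ^ 3)); auto. rewrite Rinv_r by lra. lra. }
  assert (h5 := sq_le_4pow N).
  assert (h6 : (1/8) ^ S N * 4 ^ S N = (1/2) ^ S N).
  { rewrite <- Rpow_mult_distr. f_equal. lra. }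
  unfold Rdiv. rewrite !Rabs_mult.
  assert (0 <= (1/8) ^ S N) by (apply pow_le; lra).
  apply Rle_trans with (1 * (1/8) ^ S N * (131000 * INR (S N) ^ 2) * 2).
  - repeat apply Rmult_le_compat; try apply Rabs_pos; auto;
      try (apply Rmult_le_pos; try apply Rabs_pos).
    all: try (apply Rmult_le_pos; apply Rabs_pos).
  - assert (0 <= INR (S N) ^ 2) by apply pow2_ge_0.
    change (1 * / 2) with (1 / 2). rewrite <- h6. nra.
Qed.

Lemma geom_lim L c : is_lim_seq (fun N => L + c * (1/2) ^ (S N)) L.
Proof.
  assert (H := is_lim_seq_geom (1/2) ltac:(rewrite Rabs_pos_eq; lra)).
  assert (H2 := is_lim_seq_scal_l _ (c * (1/2)) _ H). simpl in H2.
  assert (H3 := is_lim_seq_plus' _ _ L (c * (1/2) * 0) (is_lim_seq_const L) H2).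
  rewrite Rmult_0_r, Rplus_0_r in H3.
  eapply is_lim_seq_ext; [|exact H3]. intro n. simpl. ring.
Qed.

Theorem lemma2p2 :
  is_series (fun n : nat => lemma2p2_term (S n)) (1944 + 640 / sqrt 3 * PI).
Proof.
  set (L := 1944 + 640 / sqrt 3 * PI).
  assert (Hb : forall N, Rabs (L - sum_n (fun k => lemma2p2_term (S k)) N) <= 262000 * (1/2) ^ (S N)).
  { intro N. assert (HI := is_RInt_minus _ _ 0 1 _ _ gf_int (sum_int N)).
    assert (Hex : ex_RInt (fun t => gf t - sum_n (fun k => fk k t) N) 0 1) by (eexists; exact HI).
    assert (E : RInt (fun t => gf t - sum_n (fun k => fk k t) N) 0 1 = L - sum_n (fun k => lemma2p2_term (S k)) N)
      by (apply is_RInt_unique; exact HI).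
    assert (HA := abs_RInt_le_const _ 0 1 (262000 * (1/2) ^ (S N)) Rle_0_1 Hex (fun t ht => err_bound N t ht)).
    rewrite E in HA. lra. }
  assert (Hl : is_lim_seq (sum_n (fun k => lemma2p2_term (S k))) L).
  { apply is_lim_seq_le_le with (fun N => L + (-262000) * (1/2) ^ (S N))
                                (fun N => L + 262000 * (1/2) ^ (S N)).
    - intro N. specialize (Hb N). unfold Rabs in Hb. destruct (Rcase_abs _) in Hb; lra.
    - apply geom_lim.
    - apply geom_lim. }
  exact Hl.
Qed.
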